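(* For every $m\in\mathbb{N}\cup\{0\}$ and $(s,t)\in\mathbb{R}^2\setminus\{(0,0)\}$, $$\partial_s^m\Big(\frac{1}{\sqrt{s^2+t^2}}\Big)=\frac{P_m(s,t)}{(\sqrt{s^2+t^2})^{2m+1}},$$ where the polynomials $P_m$ are given, for $m\in\mathbb{N}\cup\{0\}$, by $$P_{2m}(s,t)=\sum_{i=0}^m a_{2m,2i}s^{2i}t^{2(m-i)},\qquad P_{2m+1}(s,t)=\sum_{i=0}^m a_{2m+1,2i+1}s^{2i+1}t^{2(m-i)},$$ with, for $0\le i\le m$, $$a_{2m,2i}=(-1)^{m-i}2^{2i-2m}(2m)!\,C_{2m}^{m-i}C_{m+i}^{m-i},\qquad a_{2m+1,2i+1}=(-1)^{m-i+1}2^{2i-2m}(2m+1)!\,C_{2m+1}^{m-i}C_{m+i+1}^{m-i}.$$ Moreover, for every $m\in\mathbb{N}=\{1,2,\dots\}$, $$\sum_{i=0}^m\frac{a_{2m,2i}}{C_{2m-1}^{m-i}}=-\frac{2}{2m+1}\sum_{i=0}^m\frac{a_{2m+1,2i+1}}{C_{2m}^{m-i}}=\frac{(2m)!}{2^{2m-1}},$$ $$(m+1)\sum_{i=0}^m\frac{a_{2m,2i}}{C_{2m}^{m-i}}=-\sum_{i=0}^m\frac{a_{2m+1,2i+1}}{C_{2m+1}^{m-i}}=\frac{(2m+2)!}{2^{2m+1}}.$$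
   Context: $C_n^k=\binom{n}{k}$ denotes the binomial coefficient, with the convention $C_0^0=1$. *)

(* Defs.v *)
From Stdlib Require Import Reals Factorial.
From Coquelicot Require Import Coquelicot.
Open Scope R_scope.

Definition invnorm (t : R) : R -> R := fun s => / sqrt (s ^ 2 + t ^ 2).

Definition a_even (m i : nat) : R :=
  (-1) ^ (m - i) * / 2 ^ (2 * (m - i)) * INR (Factorial.fact (2 * m))
  * Binomial.C (2 * m) (m - i) * Binomial.C (m + i) (m - i).

Definition a_odd (m i : nat) : R :=
  (-1) ^ (m - i + 1) * / 2 ^ (2 * (m - i)) * INR (Factorial.fact (2 * m + 1))
  * Binomial.C (2 * m + 1) (m - i) * Binomial.C (m + i + 1) (m - i).

(* P_{2m}(s,t) = sum_{i=0}^m a_{2m,2i} s^{2i} t^{2(m-i)}  (sum_f_R0 g m = g 0 + ... + g m) *)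
Definition P_even (m : nat) (s t : R) : R :=
  sum_f_R0 (fun i => a_even m i * s ^ (2 * i) * t ^ (2 * (m - i))) m.

Definition P_odd (m : nat) (s t : R) : R :=
  sum_f_R0 (fun i => a_odd m i * s ^ (2 * i + 1) * t ^ (2 * (m - i))) m.

(* Main.v *)
Require Import Defs.
From Stdlib Require Import Reals Factorial.
From Coquelicot Require Import Coquelicot.
From Stdlib Require Import Lia Lra.
Open Scope R_scope.

Fixpoint bin (n k : nat) : R :=
  match n, k with
  | _, O => 1
  | O, S _ => 0
  | S n', S k' => bin n' k' + bin n' (S k')
  end.

Lemma bin_0 : forall n k, (n < k)%nat -> bin n k = 0.
Proof.
  induction n as [|n IH]; intros [|k] H; simpl; try lia; auto.
  rewrite !IH by lia. ring.
Qed.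

Lemma bin_n0 : forall n, bin n 0 = 1.
Proof. intros [|n]; reflexivity. Qed.

Lemma bin_C : forall n k, (k <= n)%nat -> bin n k = Binomial.C n k.
Proof.
  induction n as [|n IH]; intros [|k] H.
  - rewrite C_n_0; reflexivity.
  - lia.
  - rewrite C_n_0; reflexivity.
  - simpl. destruct (Nat.eq_dec k n) as [->|Hk].
    + rewrite (bin_0 n (S n)) by lia. rewrite IH by lia. rewrite !C_n_n. ring.
    + rewrite !IH by lia. apply pascal. lia.
Qed.

Definition z : R := - / 4.
Definition E (m : nat) : R := sum_f_R0 (fun k => z ^ k * bin (2*m - k) k) m.
Definition Osum (m : nat) : R := sum_f_R0 (fun k => z ^ k * bin (2*m + 1 - k) k) m.

Lemma sum_shift0 : forall f n, f 0%nat = 0 ->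
  sum_f_R0 f (S n) = sum_f_R0 (fun i => f (S i)) n.
Proof.
  intros f n H. rewrite decomp_sum by lia. rewrite H. simpl. ring.
Qed.

Lemma E_S : forall m, E (S m) = Osum m + z * E m.
Proof.
  intro m. unfold E, Osum.
  rewrite decomp_sum by lia. simpl Init.Nat.pred.
  rewrite (sum_eq _ (fun j => (z ^ j * bin (2*m - j) j) * z + z ^ (S j) * bin (2*m - j) (S j))).
  2:{ intros j Hj. replace (2 * S m - S j)%nat with (S (2*m - j)) by lia. simpl. ring. }
  rewrite plus_sum, <- scal_sum.
  rewrite (Rplus_comm (z * _)).
  assert (HO : sum_f_R0 (fun k => z ^ k * bin (2*m+1-k) k) (S m) =
               sum_f_R0 (fun k => z ^ k * bin (2*m+1-k) k) m).
  { rewrite tech5. replace (2*m+1 - S m)%nat with m by lia. rewrite (bin_0 m (S m)) by lia. ring. }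
  rewrite <- HO. rewrite (decomp_sum (fun k => z ^ k * bin (2*m+1-k) k) (S m)) by lia. simpl Init.Nat.pred.
  rewrite (sum_eq (fun i => z ^ S i * bin (2*m+1 - S i) (S i)) (fun j => z ^ (S j) * bin (2*m - j) (S j))).
  2:{ intros j Hj. replace (2*m+1 - S j)%nat with (2*m - j)%nat by lia. reflexivity. }
  replace (2 * S m - 0)%nat with (2*m+1+1)%nat by lia.
  replace (2 * m + 1 - 0)%nat with (2*m+1)%nat by lia.
  rewrite !bin_n0. ring.
Qed.

Lemma O_S : forall m, Osum (S m) = E (S m) + z * Osum m.
Proof.
  intro m. unfold E, Osum.
  rewrite decomp_sum by lia. simpl Init.Nat.pred.
  rewrite (sum_eq _ (fun j => (z ^ j * bin (2*m + 1 - j) j) * z + z ^ (S j) * bin (2*m + 1 - j) (S j))).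
  2:{ intros j Hj. replace (2 * S m + 1 - S j)%nat with (S (2*m + 1 - j)) by lia. simpl. ring. }
  rewrite plus_sum, <- scal_sum.
  rewrite (decomp_sum _ (S m)) by lia. simpl Init.Nat.pred.
  rewrite (sum_eq (fun i => z ^ S i * bin (2 * S m - S i) (S i)) (fun j => z ^ (S j) * bin (2*m + 1 - j) (S j))).
  2:{ intros j Hj. replace (2 * S m - S j)%nat with (2*m + 1 - j)%nat by lia. reflexivity. }
  replace (2 * S m - 0)%nat with (S (2*m+1))%nat by lia.
  replace (2 * S m + 1 - 0)%nat with (S (2*m+2))%nat by lia.
  rewrite !bin_n0. simpl. ring.
Qed.

Lemma EO_closed : forall m, E m = INR (2*m+1) / 4 ^ m /\ Osum m = INR (m+1) / 4 ^ m.
Proof.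
  induction m as [|m [IHE IHO]].
  - unfold E, Osum. simpl. split; field.
  - assert (HE : E (S m) = INR (2 * S m + 1) / 4 ^ S m).
    { rewrite E_S, IHE, IHO. unfold z. rewrite !plus_INR, !mult_INR, !S_INR. simpl.
      field. apply pow_nonzero. lra. }
    split; auto.
    rewrite O_S, HE, IHO. unfold z. rewrite !plus_INR, !mult_INR, !S_INR. simpl.
    field. apply pow_nonzero. lra.
Qed.

Lemma sum_rev : forall f n, sum_f_R0 f n = sum_f_R0 (fun k => f (n - k)%nat) n.
Proof.
  intros f n. revert f. induction n as [|n IH]; intro f.
  - reflexivity.
  - rewrite decomp_sum by lia. simpl Init.Nat.pred. rewrite IH.
    rewrite tech5. rewrite Nat.sub_diag. rewrite Rplus_comm. f_equal.
    apply sum_eq. intros i Hi. f_equal. lia.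
Qed.

Lemma zpow : forall k, z ^ k = (-1) ^ k * / 2 ^ (2 * k).
Proof.
  intro k. unfold z. rewrite pow_mult. replace (- / 4) with (-1 * / (2^2)) by (simpl; field).
  rewrite Rpow_mult_distr. rewrite pow_inv. reflexivity.
Qed.

Lemma C_pos : forall n k, (k <= n)%nat -> 0 < Binomial.C n k.
Proof.
  intros n k _. unfold Binomial.C. apply Rdiv_lt_0_compat.
  - apply lt_0_INR, lt_O_fact.
  - apply Rmult_lt_0_compat; apply lt_0_INR, lt_O_fact.
Qed.

Lemma factS : forall n, INR (fact (S n)) = INR (S n) * INR (fact n).
Proof. intro n. rewrite fact_simpl, mult_INR. reflexivity. Qed.

Lemma term1 : forall m k, (1 <= m)%nat -> (k <= m)%nat ->
  a_even m (m - k) / Binomial.C (2 * m - 1) (m - (m - k)) =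
  (z ^ k * bin (2*m - k) k + z ^ k * match k with O => 0 | S k' => bin (2*m-2-k') k' end)
  * INR (fact (2 * m)).
Proof.
  intros m k Hm Hk. unfold a_even.
  replace (m - (m - k))%nat with k by lia.
  replace (m + (m - k))%nat with (2*m - k)%nat by lia.
  destruct k as [|k].
  - rewrite !Nat.sub_0_r, !C_n_0, bin_n0. simpl. field.
  - destruct (Nat.le_exists_sub (S k) m Hk) as [j [Hj _]]. subst m.
    rewrite !bin_C by lia. rewrite zpow. unfold Binomial.C.
    replace (2 * (j + S k) - S k - S k)%nat with (2*j)%nat by lia.
    replace (2 * (j + S k) - 1 - S k)%nat with (k+2*j)%nat by lia.
    replace (2 * (j + S k) - 2 - k - k)%nat with (2*j)%nat by lia.
    replace (2 * (j + S k) - 2 - k)%nat with (k+2*j)%nat by lia.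
    replace (2 * (j + S k) - S k)%nat with (S (k+2*j)) by lia.
    replace (2 * (j + S k) - 1)%nat with (2*k+1+2*j)%nat by lia.
    replace (2 * (j + S k))%nat with (S (2*k+1+2*j)) by lia.
    rewrite (factS (k+2*j)), (factS (2*k+1+2*j)), (factS k).
    rewrite !S_INR, !plus_INR, !mult_INR.
    assert (H2 : 2 ^ (2 * S k) <> 0) by (apply pow_nonzero; lra).
    pose proof (INR_fact_neq_0 k). pose proof (INR_fact_neq_0 (k+2*j)).
    pose proof (INR_fact_neq_0 (2*k+1+2*j)). pose proof (INR_fact_neq_0 (2*j)).
    pose proof (pos_INR k). pose proof (pos_INR j).
    set (u := (-1) ^ S k). set (v := 2 ^ (2 * S k)). simpl (INR 2); simpl (INR 1). field. repeat split; try assumption; lra.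
Qed.

Lemma term2 : forall m k, (1 <= m)%nat -> (k <= m)%nat ->
  a_odd m (m - k) / Binomial.C (2 * m) (m - (m - k)) =
  - ((z ^ k * bin (2*m + 1 - k) k + z ^ k * match k with O => 0 | S k' => bin (2*m-1-k') k' end)
  * INR (fact (2 * m + 1))).
Proof.
  intros m k Hm Hk. unfold a_odd.
  replace (m - (m - k))%nat with k by lia.
  replace (m + (m - k) + 1)%nat with (2*m + 1 - k)%nat by lia.
  destruct k as [|k].
  - rewrite !Nat.sub_0_r, !C_n_0, bin_n0. simpl. field.
  - destruct (Nat.le_exists_sub (S k) m Hk) as [j [Hj _]]. subst m.
    rewrite !bin_C by lia. rewrite zpow. unfold Binomial.C.
    replace (2 * (j + S k) + 1 - S k - S k)%nat with (2*j+1)%nat by lia.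
    replace (2 * (j + S k) + 1 - S k)%nat with (S (S (k+2*j))) by lia.
    replace (2 * (j + S k) - 1 - k - k)%nat with (2*j+1)%nat by lia.
    replace (2 * (j + S k) - 1 - k)%nat with (S (k+2*j)) by lia.
    replace (2 * (j + S k) - S k)%nat with (S (k+2*j)) by lia.
    replace (2 * (j + S k) + 1)%nat with (S (S (2*k+1+2*j))) by lia.
    replace (2 * (j + S k))%nat with (S (2*k+1+2*j)) by lia.
    rewrite (factS (S (k+2*j))), (factS (k+2*j)), (factS (S (2*k+1+2*j))), (factS (2*k+1+2*j)), (factS k).
    rewrite !S_INR, !plus_INR, !mult_INR.
    rewrite pow_add.
    assert (H2 : 2 ^ (2 * S k) <> 0) by (apply pow_nonzero; lra).
    pose proof (INR_fact_neq_0 k). pose proof (INR_fact_neq_0 (k+2*j)).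
    pose proof (INR_fact_neq_0 (2*k+1+2*j)). pose proof (INR_fact_neq_0 (2*j+1)).
    pose proof (pos_INR k). pose proof (pos_INR j).
    set (u := (-1) ^ S k). set (v := 2 ^ (2 * S k)). simpl (INR 2); simpl (INR 1).
    simpl ((-1) ^ 1). field. repeat split; try assumption; lra.
Qed.

Lemma term3 : forall m k, (k <= m)%nat ->
  a_even m (m - k) / Binomial.C (2 * m) (m - (m - k)) =
  z ^ k * bin (2*m - k) k * INR (fact (2 * m)).
Proof.
  intros m k Hk. unfold a_even.
  replace (m - (m - k))%nat with k by lia.
  replace (m + (m - k))%nat with (2*m - k)%nat by lia.
  rewrite bin_C by lia. rewrite zpow.
  assert (0 < Binomial.C (2*m) k) by (apply C_pos; lia).
  field. repeat split; try lra; apply pow_nonzero; lra.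
Qed.

Lemma term4 : forall m k, (k <= m)%nat ->
  a_odd m (m - k) / Binomial.C (2 * m + 1) (m - (m - k)) =
  - (z ^ k * bin (2*m + 1 - k) k * INR (fact (2 * m + 1))).
Proof.
  intros m k Hk. unfold a_odd.
  replace (m - (m - k))%nat with k by lia.
  replace (m + (m - k) + 1)%nat with (2*m + 1 - k)%nat by lia.
  rewrite bin_C by lia. rewrite zpow. rewrite pow_add.
  assert (0 < Binomial.C (2*m+1) k) by (apply C_pos; lia).
  simpl ((-1) ^ 1).
  field. repeat split; try lra; apply pow_nonzero; lra.
Qed.

Lemma p2 : forall m, 2 ^ (2 * m) = 4 ^ m.
Proof. intro m. rewrite pow_mult. f_equal. simpl. ring. Qed.

Lemma hsum_even : forall m', sum_f_R0 (fun k => z ^ k * match k with O => 0 | S k' => bin (2*S m'-2-k') k' end) (S m')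
  = z * E m'.
Proof.
  intro m'. rewrite sum_shift0 by (simpl; ring).
  unfold E. rewrite scal_sum. apply sum_eq. intros i Hi.
  replace (2 * S m' - 2 - i)%nat with (2*m' - i)%nat by lia. simpl. ring.
Qed.

Lemma hsum_odd : forall m', sum_f_R0 (fun k => z ^ k * match k with O => 0 | S k' => bin (2*S m'-1-k') k' end) (S m')
  = z * Osum m'.
Proof.
  intro m'. rewrite sum_shift0 by (simpl; ring).
  unfold Osum. rewrite scal_sum. apply sum_eq. intros i Hi.
  replace (2 * S m' - 1 - i)%nat with (2*m' + 1 - i)%nat by lia. simpl. ring.
Qed.

Lemma part2 : forall m : nat, (1 <= m)%nat ->
     sum_f_R0 (fun i => a_even m i / Binomial.C (2 * m - 1) (m - i)) m
       = INR (Factorial.fact (2 * m)) / 2 ^ (2 * m - 1)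
  /\ - (2 / INR (2 * m + 1)) * sum_f_R0 (fun i => a_odd m i / Binomial.C (2 * m) (m - i)) m
       = INR (Factorial.fact (2 * m)) / 2 ^ (2 * m - 1)
  /\ INR (m + 1) * sum_f_R0 (fun i => a_even m i / Binomial.C (2 * m) (m - i)) m
       = INR (Factorial.fact (2 * m + 2)) / 2 ^ (2 * m + 1)
  /\ - sum_f_R0 (fun i => a_odd m i / Binomial.C (2 * m + 1) (m - i)) m
       = INR (Factorial.fact (2 * m + 2)) / 2 ^ (2 * m + 1).
Proof.
  intros m Hm.
  assert (H4 : forall n, 4 ^ n <> 0) by (intro; apply pow_nonzero; lra).
  assert (Hf2 : INR (fact (2*m+2)) = INR (2*m+2) * INR (2*m+1) * INR (fact (2*m))).
  { replace (2*m+2)%nat with (S (S (2*m))) by lia. rewrite !factS.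
    replace (2*m+1)%nat with (S (2*m)) by lia. ring. }
  assert (Hf1 : INR (fact (2*m+1)) = INR (2*m+1) * INR (fact (2*m))).
  { replace (2*m+1)%nat with (S (2*m)) by lia. rewrite !factS. ring. }
  assert (Hp1 : 2 ^ (2*m+1) = 2 * 4 ^ m) by (rewrite pow_add, p2; simpl; ring).
  destruct (EO_closed m) as [HE HO].
  destruct m as [|m']; [lia|].
  destruct (EO_closed m') as [HE' HO'].
  assert (Hp0 : 2 ^ (2 * S m' - 1) = 2 * 4 ^ m').
  { replace (2 * S m' - 1)%nat with (2*m'+1)%nat by lia. rewrite pow_add, p2; simpl; ring. }
  pose proof (INR_fact_neq_0 (2 * S m')).
  split; [|split; [|split]].
  - rewrite sum_rev. rewrite (sum_eq _ _ _ (fun k Hk => term1 (S m') k Hm Hk)).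
    rewrite <- scal_sum, plus_sum, hsum_even. fold (E (S m')).
    rewrite Hp0, HE, HE'. rewrite !plus_INR, !mult_INR, !S_INR. simpl pow.
    unfold z. rewrite ?INR_0. field. auto.
  - rewrite sum_rev. rewrite (sum_eq _ _ _ (fun k Hk => term2 (S m') k Hm Hk)).
    rewrite (sum_eq _ (fun k => (z ^ k * bin (2*S m' + 1 - k) k + z ^ k * match k with O => 0 | S k' => bin (2*S m'-1-k') k' end) * (- INR (fact (2 * S m' + 1))))) by (intros; ring).
    rewrite <- scal_sum, plus_sum, hsum_odd. fold (Osum (S m')).
    rewrite Hp0, HO, HO', Hf1. rewrite !plus_INR, !mult_INR, !S_INR, ?INR_0. simpl pow.
    unfold z. field. split; [auto|]. pose proof (pos_INR m'). lra.
  - rewrite sum_rev. rewrite (sum_eq _ _ _ (fun k Hk => term3 (S m') k Hk)).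
    rewrite <- scal_sum. fold (E (S m')).
    rewrite Hp1, HE, Hf2. rewrite !plus_INR, !mult_INR, !S_INR, ?INR_0. simpl pow.
    field. auto.
  - rewrite sum_rev. rewrite (sum_eq _ _ _ (fun k Hk => term4 (S m') k Hk)).
    rewrite (sum_eq _ (fun k => (z ^ k * bin (2*S m' + 1 - k) k) * (- INR (fact (2 * S m' + 1))))) by (intros; ring).
    rewrite <- scal_sum. fold (Osum (S m')).
    rewrite Hp1, HO, Hf1, Hf2. rewrite !plus_INR, !mult_INR, !S_INR, ?INR_0. simpl pow.
    field. auto.
Qed.

Definition Fc (n : nat) : R := INR (fact n).

Lemma ae_cf : forall m i k, m = (i + k)%nat ->
  a_even m i = (-1) ^ k * / 2 ^ (2 * k) * Fc (2 * (i + k)) * Fc (2 * (i + k)) / (Fc k * Fc k * Fc (2 * i)).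
Proof.
  intros m i k ->. unfold a_even, Binomial.C, Fc.
  replace (i + k - i)%nat with k by lia.
  replace (2 * (i + k) - k)%nat with (2*i+k)%nat by lia.
  replace (i + k + i - k)%nat with (2*i)%nat by lia.
  replace (i + k + i)%nat with (2*i+k)%nat by lia.
  pose proof (INR_fact_neq_0 k). pose proof (INR_fact_neq_0 (2*i)). pose proof (INR_fact_neq_0 (2*i+k)).
  field. repeat split; auto. apply pow_nonzero; lra.
Qed.

Lemma ao_cf : forall m i k, m = (i + k)%nat ->
  a_odd m i = - ((-1) ^ k * / 2 ^ (2 * k) * Fc (2 * (i + k) + 1) * Fc (2 * (i + k) + 1) / (Fc k * Fc k * Fc (2 * i + 1))).
Proof.
  intros m i k ->. unfold a_odd, Binomial.C, Fc.
  replace (i + k - i)%nat with k by lia.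
  replace (2 * (i + k) + 1 - k)%nat with (2*i+k+1)%nat by lia.
  replace (i + k + i + 1 - k)%nat with (2*i+1)%nat by lia.
  replace (i + k + i + 1)%nat with (2*i+k+1)%nat by lia.
  pose proof (INR_fact_neq_0 k). pose proof (INR_fact_neq_0 (2*i+1)). pose proof (INR_fact_neq_0 (2*i+k+1)).
  rewrite pow_add. simpl ((-1)^1).
  field. repeat split; auto. apply pow_nonzero; lra.
Qed.

Lemma FcS : forall n, Fc (S n) = INR (S n) * Fc n.
Proof. intro n. unfold Fc. apply factS. Qed.

Lemma Fc_nz : forall n, Fc n <> 0.
Proof. intro n. apply INR_fact_neq_0. Qed.

Lemma R1 : forall m i, (i < m)%nat ->
  (2 * INR i - 4 * INR m - 1) * a_even m i + INR (2 * S i) * a_even m (S i) = a_odd m i.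
Proof.
  intros m i H. destruct (Nat.le_exists_sub (S i) m H) as [k [Hk _]].
  rewrite (ae_cf m i (S k)) by lia. rewrite (ae_cf m (S i) k) by lia. rewrite (ao_cf m i (S k)) by lia.
  replace (2 * (S i + k))%nat with (2 * (i + S k))%nat by lia.
  replace (2 * S i)%nat with (S (S (2 * i))) by lia.
  replace (2 * i + 1)%nat with (S (2 * i)) by lia.
  replace (2 * (i + S k) + 1)%nat with (S (2 * (i + S k))) by lia.
  rewrite (FcS (S (2 * i))), (FcS (2*i)), (FcS k), (FcS (2 * (i + S k))).
  subst m.
  replace (2 * S k)%nat with (S (S (2 * k))) by lia. rewrite <- !tech_pow_Rmult.
  pose proof (Fc_nz k). pose proof (Fc_nz (2*i)). pose proof (Fc_nz (2*(i+S k))).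
  assert (2 ^ (2*k) <> 0) by (apply pow_nonzero; lra).
  pose proof (pos_INR k). pose proof (pos_INR i).
  set (u := (-1) ^ k). set (v := 2 ^ (2 * k)). set (w := Fc (2 * (i + S k))).
  rewrite !S_INR, !plus_INR, !mult_INR, !S_INR, !plus_INR, !S_INR. simpl (INR 2). simpl (INR 0).
  field. repeat split; try assumption; lra.
Qed.

Ltac nzs := repeat split; try assumption; try (apply pow_nonzero; lra); try apply Fc_nz; try lra.

Lemma Fc0 : Fc 0 = 1.
Proof. reflexivity. Qed.
Lemma Fc1 : Fc 1 = 1.
Proof. reflexivity. Qed.

Lemma R1e : forall m, (2 * INR m - 4 * INR m - 1) * a_even m m = a_odd m m.
Proof.
  intro m. rewrite (ae_cf m m 0), (ao_cf m m 0) by lia.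
  rewrite Nat.add_0_r. replace (2 * m + 1)%nat with (S (2 * m)) by lia.
  rewrite FcS, Fc0. pose proof (Fc_nz (2*m)). rewrite S_INR, mult_INR. simpl (INR 2).
  simpl pow. pose proof (pos_INR m). field. nzs.
Qed.

Lemma R2 : forall m i, (i < m)%nat ->
  (2 * INR i - 4 * INR m - 2) * a_odd m i + INR (2 * S i + 1) * a_odd m (S i) = a_even (S m) (S i).
Proof.
  intros m i H. destruct (Nat.le_exists_sub (S i) m H) as [k [Hk _]].
  rewrite (ao_cf m i (S k)) by lia. rewrite (ao_cf m (S i) k) by lia. rewrite (ae_cf (S m) (S i) (S k)) by lia.
  replace (2 * (S i + k) + 1)%nat with (2 * (i + S k) + 1)%nat by lia.
  replace (2 * (S i + S k))%nat with (S (2 * (i + S k) + 1)) by lia.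
  replace (2 * S i + 1)%nat with (S (S (2 * i + 1))) by lia.
  replace (2 * S i)%nat with (S (2 * i + 1)) by lia.
  rewrite (FcS (S (2 * i + 1))), (FcS (2*i+1)), (FcS k), (FcS (2 * (i + S k) + 1)).
  subst m.
  replace (2 * S k)%nat with (S (S (2 * k))) by lia. rewrite <- !tech_pow_Rmult.
  pose proof (Fc_nz k). pose proof (Fc_nz (2*i+1)). pose proof (Fc_nz (2*(i+S k)+1)).
  assert (2 ^ (2*k) <> 0) by (apply pow_nonzero; lra).
  pose proof (pos_INR k). pose proof (pos_INR i).
  set (u := (-1) ^ k). set (v := 2 ^ (2 * k)). set (w := Fc (2 * (i + S k) + 1)).
  rewrite !S_INR, !plus_INR, !mult_INR, !S_INR, !plus_INR, !S_INR. simpl (INR 2). simpl (INR 0).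
  field. nzs.
Qed.

Lemma R2e : forall m, (2 * INR m - 4 * INR m - 2) * a_odd m m = a_even (S m) (S m).
Proof.
  intro m. rewrite (ao_cf m m 0), (ae_cf (S m) (S m) 0) by lia.
  rewrite !Nat.add_0_r. replace (2 * S m)%nat with (S (2 * m + 1)) by lia.
  rewrite FcS, Fc0. pose proof (Fc_nz (2*m+1)). pose proof (pos_INR m).
  simpl pow.
  rewrite ?S_INR, ?plus_INR, ?mult_INR. simpl (INR 2). simpl (INR 1).
  field. nzs.
Qed.

Lemma R2z : forall m, a_odd m 0 = a_even (S m) 0.
Proof.
  intro m. rewrite (ao_cf m 0 m), (ae_cf (S m) 0 (S m)) by lia.
  rewrite !Nat.add_0_l. replace (2 * S m)%nat with (S (2 * m + 1)) by lia.
  rewrite (FcS (2*m+1)), (FcS m). pose proof (Fc_nz (2*m+1)). pose proof (Fc_nz m).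
  replace (2 * 0 + 1)%nat with 1%nat by lia. replace (2 * 0)%nat with 0%nat by lia.
  rewrite Fc0, Fc1. pose proof (pos_INR m).
  replace (2 * m + 1)%nat with (S (2 * m)) by lia. 
  rewrite <- !tech_pow_Rmult.
  set (u := (-1) ^ m). set (v := 2 ^ (2 * m)). set (w := Fc (S (2 * m))).
  rewrite ?S_INR, ?plus_INR, ?mult_INR. simpl (INR 2). simpl (INR 1).
  field. nzs.
Qed.

Ltac inr := repeat first [rewrite S_INR | rewrite plus_INR | rewrite mult_INR | rewrite INR_0].

Lemma lin_sum : forall f g n a b,
  a * sum_f_R0 f n - b * sum_f_R0 g n = sum_f_R0 (fun i => a * f i - b * g i) n.
Proof.
  intros f g n a b. induction n as [|n IH]; simpl; [ring|]. rewrite <- IH. ring.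
Qed.

Lemma sum_combine : forall n X Y Z,
  (forall i, (i < n)%nat -> X i + Y (S i) = Z i) -> X n = Z n ->
  sum_f_R0 X n + (sum_f_R0 Y n - Y 0%nat) = sum_f_R0 Z n.
Proof.
  intros [|n] X Y Z H1 H2.
  - simpl. rewrite H2. ring.
  - rewrite (decomp_sum Y) by lia. simpl Init.Nat.pred.
    rewrite !tech5. rewrite H2.
    rewrite (sum_eq Z (fun i => X i + Y (S i))) by (intros; symmetry; apply H1; lia).
    rewrite plus_sum. ring.
Qed.

Definition dPE (m : nat) (s t : R) : R :=
  sum_f_R0 (fun i => a_even m i * (INR (2*i) * s ^ (pred (2*i))) * t ^ (2*(m-i))) m.
Definition dPO (m : nat) (s t : R) : R :=
  sum_f_R0 (fun i => a_odd m i * (INR (2*i+1) * s ^ (pred (2*i+1))) * t ^ (2*(m-i))) m.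

Lemma ident_even : forall m s t,
  (s^2 + t^2) * dPE m s t - (INR (2*(2*m)+1) * s) * P_even m s t = P_odd m s t.
Proof.
  intros m s t. unfold dPE, P_even, P_odd. rewrite lin_sum.
  set (X := fun i => (2*INR i - 4*INR m - 1) * a_even m i * s^(2*i+1) * t^(2*(m-i))).
  set (W := fun i => a_even m i * INR (2*i) * s^(pred (2*i)) * t^(2*(m-i)) * t^2).
  rewrite (sum_eq _ (fun i => X i + W i)).
  2:{ intros [|i] _; unfold X, W.
      - replace (2*0)%nat with 0%nat by lia. simpl pred. inr. simpl pow. ring.
      - replace (2 * S i)%nat with (S (2*i+1)) by lia. rewrite Nat.pred_succ.
        replace (S (2*i+1) + 1)%nat with (S (S (2*i+1))) by lia. rewrite <- !tech_pow_Rmult. inr. ring. }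
  rewrite plus_sum.
  replace (sum_f_R0 W m) with (sum_f_R0 W m - W 0%nat) by (unfold W; simpl INR; ring).
  apply sum_combine.
  - intros i Hi. unfold X, W. rewrite <- (R1 m i Hi).
    replace (pred (2 * S i)) with (2*i+1)%nat by lia.
    replace (2*(m-i))%nat with (2*(m - S i) + 2)%nat by lia. rewrite (pow_add t). ring.
  - unfold X. rewrite <- R1e. ring.
Qed.

Lemma ident_odd : forall m s t,
  (s^2 + t^2) * dPO m s t - (INR (2*(2*m+1)+1) * s) * P_odd m s t = P_even (S m) s t.
Proof.
  intros m s t. unfold dPO, P_even, P_odd. rewrite lin_sum.
  set (X := fun i => (2*INR i - 4*INR m - 2) * a_odd m i * s^(2*i+2) * t^(2*(m-i))).
  set (W := fun i => a_odd m i * INR (2*i+1) * s^(2*i) * t^(2*(m-i)) * t^2).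
  rewrite (sum_eq _ (fun i => X i + W i)).
  2:{ intros i _; unfold X, W.
      replace (pred (2*i+1)) with (2*i)%nat by lia.
      replace (2*i+2)%nat with (2*i + 2)%nat by lia. replace (2*i+1)%nat with (S (2*i)) by lia.
      rewrite pow_add. rewrite <- !tech_pow_Rmult. inr. ring. }
  rewrite plus_sum.
  rewrite (decomp_sum _ (S m)) by lia. simpl Init.Nat.pred.
  replace (sum_f_R0 X m + sum_f_R0 W m) with (W 0%nat + (sum_f_R0 X m + (sum_f_R0 W m - W 0%nat))) by ring.
  f_equal.
  - unfold W. rewrite R2z. replace (2 * (S m - 0))%nat with (2*m+2)%nat by lia.
    rewrite !Nat.sub_0_r, (pow_add t). simpl. ring.
  - apply sum_combine.
    + intros i Hi. unfold X, W. rewrite <- (R2 m i Hi).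
      replace (2 * (S m - S i))%nat with (2*(m - S i) + 2)%nat by lia.
      replace (2*(m-i))%nat with (2*(m - S i) + 2)%nat by lia. rewrite (pow_add t).
      replace (2 * S i)%nat with (2*i+2)%nat by lia. ring.
    + unfold X. rewrite <- R2e. replace (2 * (S m - S m))%nat with (2*(m-m))%nat by lia.
      replace (2 * S m)%nat with (2*m+2)%nat by lia. ring.
Qed.

Lemma is_derive_sum : forall (f : nat -> R -> R) (f' : nat -> R) n x,
  (forall i, (i <= n)%nat -> is_derive (f i) x (f' i)) ->
  is_derive (fun y => sum_f_R0 (fun i => f i y) n) x (sum_f_R0 f' n).
Proof.
  intros f f' n x H. induction n as [|n IH].
  - simpl. apply H. lia.
  - simpl. apply (is_derive_plus (fun y => sum_f_R0 (fun i => f i y) n) (f (S n))).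
    + apply IH. intros; apply H; lia.
    + apply H; lia.
Qed.

Lemma is_derive_mono : forall (c d : R) p x,
  is_derive (fun y => c * y ^ p * d) x (c * (INR p * x ^ pred p) * d).
Proof.
  intros c d p x. auto_derive. auto. ring.
Qed.

Lemma PE_deriv : forall m s t, is_derive (fun y => P_even m y t) s (dPE m s t).
Proof.
  intros m s t. unfold P_even, dPE.
  apply (is_derive_sum (fun i y => a_even m i * y ^ (2*i) * t ^ (2*(m-i)))).
  intros i _. apply is_derive_mono.
Qed.

Lemma PO_deriv : forall m s t, is_derive (fun y => P_odd m y t) s (dPO m s t).
Proof.
  intros m s t. unfold P_odd, dPO.
  apply (is_derive_sum (fun i y => a_odd m i * y ^ (2*i+1) * t ^ (2*(m-i)))).
  intros i _. apply is_derive_mono.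
Qed.

Lemma deriv_quot : forall (P : R -> R) dP n t s, 0 < s^2 + t^2 -> is_derive P s dP ->
  is_derive (fun y => P y / sqrt (y^2 + t^2) ^ (S n)) s
    (((s^2 + t^2) * dP - (INR (S n) * s) * P s) / sqrt (s^2 + t^2) ^ (S n + 2)).
Proof.
  intros P dP n t s Hpos HP.
  assert (Hg : is_derive (fun y => sqrt (y^2 + t^2) ^ (S n)) s
                 (INR (S n) * (s / sqrt (s^2+t^2)) * sqrt (s^2+t^2) ^ n)).
  { auto_derive. lra.
    change (match n with 0%nat => 1 | S _ => INR n + 1 end) with (INR (S n)).
    replace (s * (s * 1) + t * (t * 1)) with (s^2+t^2) by ring.
    assert (0 < sqrt (s^2+t^2)) by (apply sqrt_lt_R0; lra).
    field. lra. }
  assert (Hr0 : 0 < sqrt (s^2+t^2)) by (apply sqrt_lt_R0; lra).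
  assert (Hr : sqrt (s^2+t^2) * sqrt (s^2+t^2) = s^2+t^2) by (apply sqrt_sqrt; lra).
  set (r := sqrt (s^2+t^2)) in *.
  assert (Hrn : r ^ n <> 0) by (apply pow_nonzero; lra).
  replace (((s^2 + t^2) * dP - (INR (S n) * s) * P s) / r ^ (S n + 2))
    with ((dP * r ^ (S n) - P s * (INR (S n) * (s / r) * r ^ n)) / (r ^ (S n)) ^ 2).
  - apply (is_derive_div P (fun y => sqrt (y^2 + t^2) ^ (S n))); auto.
    apply pow_nonzero. apply Rgt_not_eq. exact Hr0.
  - rewrite <- Hr. rewrite pow_add. rewrite <- !tech_pow_Rmult. simpl pow.
    field. split; lra.
Qed.

Lemma loc_pos : forall s t, 0 < s^2 + t^2 -> locally s (fun y => 0 < y^2 + t^2).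
Proof.
  intros s t H.
  destruct (Rtotal_order s 0) as [Hs|[Hs|Hs]].
  - apply (locally_interval _ s m_infty 0); simpl; auto.
    intros y _ Hy. assert (0 < y^2) by (simpl; nra). nra.
  - subst s. assert (0 < t^2) by (simpl in *; nra).
    apply (locally_interval _ 0 m_infty p_infty); simpl; auto.
    intros y _ _. assert (0 <= y^2) by (simpl; nra). lra.
  - apply (locally_interval _ s 0 p_infty); simpl; auto.
    intros y Hy _. assert (0 < y^2) by (simpl; nra). nra.
Qed.


Lemma step : forall t k n (P dP : R -> R),
  (forall y, 0 < y^2 + t^2 -> Derive_n (invnorm t) k y = P y / sqrt (y^2 + t^2) ^ (S n)) ->
  (forall y, is_derive P y (dP y)) ->
  forall s, 0 < s^2 + t^2 ->
  Derive_n (invnorm t) (S k) s = ((s^2 + t^2) * dP s - (INR (S n) * s) * P s) / sqrt (s^2 + t^2) ^ (S n + 2).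
Proof.
  intros t k n P dP Hk HP s Hs.
  change (Derive_n (invnorm t) (S k) s) with (Derive (Derive_n (invnorm t) k) s).
  rewrite (Derive_ext_loc _ (fun y => P y / sqrt (y^2 + t^2) ^ (S n))).
  - apply is_derive_unique. apply deriv_quot; auto.
  - apply (filter_imp (fun y => 0 < y^2 + t^2)); [|apply loc_pos; auto].
    intros y Hy. apply Hk; auto.
Qed.

Lemma even_to_odd : forall t m,
  (forall s, 0 < s^2 + t^2 -> Derive_n (invnorm t) (2 * m) s
       = P_even m s t / (sqrt (s ^ 2 + t ^ 2)) ^ (2 * (2 * m) + 1)) ->
  (forall s, 0 < s^2 + t^2 -> Derive_n (invnorm t) (2 * m + 1) s
       = P_odd m s t / (sqrt (s ^ 2 + t ^ 2)) ^ (2 * (2 * m + 1) + 1)).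
Proof.
  intros t m He s Hs.
  assert (H := step t (2*m) (2*(2*m)) (fun y => P_even m y t) (fun y => dPE m y t)).
  replace (Derive_n (invnorm t) (2*m+1) s) with (Derive_n (invnorm t) (S (2*m)) s) by (f_equal; lia).
  rewrite H; auto.
  - rewrite <- ident_even. replace (S (2*(2*m))) with (2*(2*m)+1)%nat by lia.
    replace (2*(2*m)+1+2)%nat with (2*(2*m+1)+1)%nat by lia. reflexivity.
  - intros y Hy. rewrite He by auto. replace (S (2*(2*m))) with (2*(2*m)+1)%nat by lia. reflexivity.
  - intro y. apply PE_deriv.
Qed.

Lemma odd_to_even : forall t m,
  (forall s, 0 < s^2 + t^2 -> Derive_n (invnorm t) (2 * m + 1) s
       = P_odd m s t / (sqrt (s ^ 2 + t ^ 2)) ^ (2 * (2 * m + 1) + 1)) ->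
  (forall s, 0 < s^2 + t^2 -> Derive_n (invnorm t) (2 * S m) s
       = P_even (S m) s t / (sqrt (s ^ 2 + t ^ 2)) ^ (2 * (2 * S m) + 1)).
Proof.
  intros t m Ho s Hs.
  assert (H := step t (2*m+1) (2*(2*m+1)) (fun y => P_odd m y t) (fun y => dPO m y t)).
  replace (Derive_n (invnorm t) (2 * S m) s) with (Derive_n (invnorm t) (S (2*m+1)) s) by (f_equal; lia).
  rewrite H; auto.
  - rewrite <- ident_odd. replace (S (2*(2*m+1))) with (2*(2*m+1)+1)%nat by lia.
    replace (2*(2*m+1)+1+2)%nat with (2*(2*S m)+1)%nat by lia. reflexivity.
  - intros y Hy. rewrite Ho by auto. replace (S (2*(2*m+1))) with (2*(2*m+1)+1)%nat by lia. reflexivity.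
  - intro y. apply PO_deriv.
Qed.

Lemma part1_pos : forall t m,
  (forall s, 0 < s^2 + t^2 -> Derive_n (invnorm t) (2 * m) s
       = P_even m s t / (sqrt (s ^ 2 + t ^ 2)) ^ (2 * (2 * m) + 1))
  /\ (forall s, 0 < s^2 + t^2 -> Derive_n (invnorm t) (2 * m + 1) s
       = P_odd m s t / (sqrt (s ^ 2 + t ^ 2)) ^ (2 * (2 * m + 1) + 1)).
Proof.
  intros t m. induction m as [|m [IHe IHo]].
  - assert (HE : forall s, 0 < s^2 + t^2 -> Derive_n (invnorm t) (2 * 0) s
       = P_even 0 s t / (sqrt (s ^ 2 + t ^ 2)) ^ (2 * (2 * 0) + 1)).
    { intros s Hs. simpl Derive_n. unfold invnorm, P_even, a_even, Binomial.C. simpl.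
      assert (0 < sqrt (s * (s * 1) + t * (t * 1))) by (apply sqrt_lt_R0; simpl in Hs; lra).
      field. lra. }
    split; auto. apply even_to_odd; auto.
  - assert (HE := odd_to_even t m IHo). split; auto. apply even_to_odd; auto.
Qed.

Theorem lemma2p3 :
  (forall (m : nat) (s t : R), (s, t) <> (0, 0) ->
     Derive_n (invnorm t) (2 * m) s
       = P_even m s t / (sqrt (s ^ 2 + t ^ 2)) ^ (2 * (2 * m) + 1)
  /\ Derive_n (invnorm t) (2 * m + 1) s
       = P_odd m s t / (sqrt (s ^ 2 + t ^ 2)) ^ (2 * (2 * m + 1) + 1))
  /\
  (forall m : nat, (1 <= m)%nat ->
     sum_f_R0 (fun i => a_even m i / Binomial.C (2 * m - 1) (m - i)) m
       = INR (Factorial.fact (2 * m)) / 2 ^ (2 * m - 1)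
  /\ - (2 / INR (2 * m + 1)) * sum_f_R0 (fun i => a_odd m i / Binomial.C (2 * m) (m - i)) m
       = INR (Factorial.fact (2 * m)) / 2 ^ (2 * m - 1)
  /\ INR (m + 1) * sum_f_R0 (fun i => a_even m i / Binomial.C (2 * m) (m - i)) m
       = INR (Factorial.fact (2 * m + 2)) / 2 ^ (2 * m + 1)
  /\ - sum_f_R0 (fun i => a_odd m i / Binomial.C (2 * m + 1) (m - i)) m
       = INR (Factorial.fact (2 * m + 2)) / 2 ^ (2 * m + 1)).
Proof.
  split.
  - intros m s t Hst.
    assert (Hs : 0 < s^2 + t^2).
    { destruct (Req_dec s 0) as [->|Hs0].
      - destruct (Req_dec t 0) as [->|Ht0]; [exfalso; apply Hst; reflexivity|].
        assert (0 < t^2) by (simpl; nra). simpl; nra.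
      - assert (0 < s^2) by (simpl; nra). assert (0 <= t^2) by (simpl; nra). lra. }
    destruct (part1_pos t m) as [He Ho]. split; auto.
  - exact part2.
Qed.
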